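(* Let $R$ be a commutative Noetherian ring, $I$ an ideal of $R$, $E$ an injective $R$-module and $K$ a submodule of $E$. Put $L:=E/K$. Then $\dfrac{L}{\Gamma_I(L)}\otimes_R \dfrac{R}{I}=0$.
   Context: For an $R$-module $N$, $\Gamma_I(N)=\bigcup_{n\geq 1}(0:_N I^n)$ is the submodule of elements annihilated by some power of $I$. *)

(* Defs.v *)
From HB Require Import structures.
From mathcomp Require Import all_boot all_order all_algebra.
Set Implicit Arguments. Unset Strict Implicit. Unset Printing Implicit Defensive.
Import GRing.Theory.
Local Open Scope ring_scope.

Definition is_ideal (R : comPzRingType) (I : R -> Prop) : Prop :=
  I 0 /\ (forall x y, I x -> I y -> I (x + y)) /\ (forall r x, I x -> I (r * x)).

Definition in_ideal_gen (R : comPzRingType) (s : seq R) (x : R) : Prop :=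
  exists c : seq R, size c = size s /\ x = \sum_(i < size s) c`_i * s`_i.

Definition noetherian (R : comPzRingType) : Prop :=
  forall I : R -> Prop, is_ideal I ->
    exists s : seq R, forall x, I x <-> in_ideal_gen s x.

Fixpoint ideal_pow (R : comPzRingType) (I : R -> Prop) (n : nat) : R -> Prop :=
  match n with
  | 0 => fun _ => True
  | n'.+1 => fun r => exists s : seq (R * R),
      (forall p, p \in s -> I p.1 /\ ideal_pow I n' p.2) /\
      r = \sum_(p <- s) p.1 * p.2
  end.

Definition is_submodule (R : comPzRingType) (M : lmodType R) (K : M -> Prop) : Prop :=
  K 0 /\ (forall x y, K x -> K y -> K (x + y)) /\ (forall (r : R) x, K x -> K (r *: x)).

Definition injective_module (R : comPzRingType) (E : lmodType R) : Prop :=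
  forall (M N : lmodType R) (f : {linear M -> N}) (g : {linear M -> E}),
    injective f -> exists h : {linear N -> E}, forall m, h (f m) = g m.

Definition Gamma (R : comPzRingType) (I : R -> Prop) (N : lmodType R) (x : N) : Prop :=
  exists n : nat, (0 < n)%N /\ forall r, ideal_pow I n r -> r *: x = 0.

Definition bilinear_map (R : comPzRingType) (M N P : lmodType R) (b : M -> N -> P) : Prop :=
  (forall x1 x2 y, b (x1 + x2) y = b x1 y + b x2 y) /\
  (forall (r : R) x y, b (r *: x) y = r *: b x y) /\
  (forall x y1 y2, b x (y1 + y2) = b x y1 + b x y2) /\
  (forall (r : R) x y, b x (r *: y) = r *: b x y).

(* M (x)_R N = 0, via the universal property of the tensor product:
   every R-bilinear map out of M x N into any R-module vanishes. *)
Definition tensor_zero (R : comPzRingType) (M N : lmodType R) : Prop :=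
  forall (P : lmodType R) (b : M -> N -> P), bilinear_map b -> forall x y, b x y = 0.

(* Main.v *)
Require Import Defs.
From HB Require Import structures.
From mathcomp Require Import all_boot all_order all_algebra.
From mathcomp Require Import boolp.
Import GRing.Theory.
Local Open Scope ring_scope.

Section SubMod.
Variables (R : comPzRingType) (V : lmodType R) (P : V -> Prop).
Hypothesis HP : is_submodule P.

Definition Pb : pred V := fun x => (fun _ : is_submodule P => `[< P x >]) HP.

Lemma Pb_closed : subsemimod_closed Pb.
Proof.
case: HP => H0 [HD HZ]; split; [split|].
- by apply/asboolP.
- by move=> x y /asboolP Hx /asboolP Hy; apply/asboolP; apply: HD.
- by move=> a x /asboolP Hx; apply/asboolP; apply: HZ.
Qed.

HB.instance Definition _ := GRing.isSubmodClosed.Build R V Pb Pb_closed.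

Inductive subM : Type := SubM (x : V) of x \in Pb.
Definition subM_val (w : subM) := let: SubM u _ := w in u.
HB.instance Definition _ := [isSub of subM for subM_val].
HB.instance Definition _ := [Choice of subM by <:].
HB.instance Definition _ := [SubChoice_isSubLmodule of subM by <:].

Lemma subM_valP (w : subM) : P (subM_val w).
Proof. case: w => x Hx; exact/asboolP. Qed.


Lemma mkSubP x : P x -> x \in Pb.
Proof. by move=> Hx; rewrite unfold_in /Pb; apply/asboolP. Qed.
End SubMod.

Lemma step (R : comPzRingType) (E : lmodType R) (HE : injective_module E) (a : R) (e : E) (m : nat)
  (Hm : forall r : R, (r * a ^+ m.+1) *: e = 0 -> (r * a ^+ m) *: e = 0) :
  exists u : E, a ^+ m.+1 *: u = a ^+ m *: e /\ (forall s : R, s *: e = 0 -> s *: u = 0).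
Proof.
pose G := fun x : (R^o * E)%type => exists r s : R, s *: e = 0 /\ x.1 = r * a^+m.+1 + s /\ x.2 = (r * a^+m) *: e.
have HG : is_submodule G.
  split; [|split].
  - by exists 0, 0; rewrite !mul0r scale0r addr0.
  - move=> [x1 x2] [y1 y2]; rewrite /G /= => [[r [s [Hs [-> ->]]]] [r' [s' [Hs' [-> ->]]]]].
    exists (r + r'), (s + s'); split; first by rewrite scalerDl Hs Hs' addr0.
    split => /=; first by rewrite mulrDl addrACA.
    by rewrite mulrDl scalerDl.
  - move=> c [x1 x2]; rewrite /G /= => [[r [s [Hs [-> ->]]]]].
    exists (c * r), (c * s); split; first by rewrite -scalerA Hs scaler0.
    split => /=; first by rewrite /GRing.scale /= mulrDr !mulrA.
    by rewrite scalerA mulrA.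
pose M := @subM _ _ G HG.
pose f := fun x : M => (@subM_val _ _ _ HG x).1 : R^o.
have lf : linear f.
  by move=> c x y; rewrite /f GRing.valD GRing.valZ.
pose fL : {linear M -> R^o} := HB.pack f (GRing.isLinear.Build _ _ _ _ f lf).
pose g := fun x : M => (@subM_val _ _ _ HG x).2 : E.
have lg : linear g.
  by move=> c x y; rewrite /g GRing.valD GRing.valZ.
pose gL : {linear M -> E} := HB.pack g (GRing.isLinear.Build _ _ _ _ g lg).
have finj : injective fL.
  move=> x y Hxy; apply: val_inj.
  have Gx := @subM_valP _ _ _ HG x; have Gy := @subM_valP _ _ _ HG y.
  change (f x = f y) in Hxy; rewrite /f in Hxy.
  rewrite /=; move: Hxy Gx Gy.
  case: (@subM_val _ _ _ HG x) => x1 x2; case: (@subM_val _ _ _ HG y) => y1 y2 /= ->.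
  rewrite /G /= => -[r [s [Hs [-> ->]]]] [r' [s' [Hs' [Heq ->]]]].
  congr pair; apply/eqP; rewrite -subr_eq0 -scalerBl -mulrBl; apply/eqP; apply: Hm.
  have : (r' * a ^+ m.+1 + s') *: e = (r * a ^+ m.+1 + s) *: e by rewrite Heq.
  rewrite !scalerDl Hs Hs' !addr0 => H.
  by rewrite mulrBl scalerBl H subrr.
have [h Hh] := HE _ _ fL gL finj.
have key : forall x, G x -> h x.1 = x.2.
  move=> x Gx; have := Hh (@SubM _ _ _ HG x (@mkSubP _ _ _ HG x Gx)); done.
have hd : forall d : R^o, h d = d *: h 1.
  move=> d; rewrite -linearZ; f_equal.
  by rewrite -[RHS]/(d * 1) mulr1.
exists (h 1); split.
- rewrite -hd (key (a ^+ m.+1, a ^+ m *: e)) //.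
  exists 1, 0; split; [exact: scale0r | split => /=; by rewrite ?mul1r ?addr0].
- move=> s Hs; rewrite -hd (key (s, 0)) //.
  exists 0, s; split => //; split => /=; by rewrite ?mul0r ?scale0r ?add0r.
Qed.

Lemma gen_in (R : comPzRingType) (s : seq R) i : (i < size s)%N -> in_ideal_gen s s`_i.
Proof.
move=> Hi; exists [seq (j == i)%:R | j <- iota 0 (size s)]; split.
  by rewrite size_map size_iota.
rewrite (bigD1 (Ordinal Hi)) //= big1 ?addr0.
  by rewrite (nth_map 0%N) ?size_iota // nth_iota // add0n eqxx mul1r.
move=> j /eqP Hj; rewrite (nth_map 0%N) ?size_iota // nth_iota // add0n.
have -> : (j == i :> nat) = false by apply/eqP => Hji; apply: Hj; apply: val_inj.
by rewrite mul0r.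
Qed.

Lemma max_exists (n : nat) (P : nat -> nat -> Prop) :
  (forall i j k, (j <= k)%N -> P i j -> P i k) ->
  (forall i, (i < n)%N -> exists j, P i j) -> exists m, forall i, (i < n)%N -> P i m.
Proof.
move=> Hmono; elim: n => [|n IH] H; first by exists 0%N.
have [m Hm] := IH (fun i Hi => H i (ltnW Hi)).
have [j Hj] := H n (ltnSn n).
exists (maxn m j) => i; rewrite ltnS leq_eqVlt => /orP [/eqP -> | Hi].
  by apply: Hmono Hj; rewrite leq_maxr.
by apply: Hmono (Hm i Hi); rewrite leq_maxl.
Qed.

Lemma mono_pow (R : comPzRingType) (E : lmodType R) (a r : R) (e : E) j k :
  (j <= k)%N -> (r * a ^+ j) *: e = 0 -> (r * a ^+ k) *: e = 0.
Proof.
move=> Hjk H; rewrite -(subnKC Hjk) exprD mulrA mulrC -scalerA H scaler0 //.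
Qed.
Arguments mono_pow {R E a r e j k}.

Lemma stab (R : comPzRingType) (HR : noetherian R) (E : lmodType R) (a : R) (e : E) :
  exists m, forall r, (r * a ^+ m.+1) *: e = 0 -> (r * a ^+ m) *: e = 0.
Proof.
pose U := fun r : R => exists j, (r * a ^+ j) *: e = 0.
have HU : is_ideal U.
  split; [|split].
  - by exists 0%N; rewrite mul0r scale0r.
  - move=> x y [j Hj] [k Hk]; exists (maxn j k).
    rewrite mulrDl scalerDl (mono_pow _ Hj) ?leq_maxl // (mono_pow _ Hk) ?leq_maxr //.
    by rewrite addr0.
  - by move=> c x [j Hj]; exists j; rewrite -mulrA -scalerA Hj scaler0.
have [s Hs] := HR U HU.
have [m Hm] : exists m, forall i, (i < size s)%N -> (s`_i * a ^+ m) *: e = 0.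
  apply: max_exists => [i j k Hjk|i Hi]; first exact: mono_pow.
  by apply/Hs; apply: gen_in.
exists m => r Hr.
have [c [Hc ->]] : in_ideal_gen s r by apply/Hs; exists m.+1.
rewrite mulr_suml scaler_suml big1 // => i _.
by rewrite -mulrA -scalerA Hm ?scaler0.
Qed.

Lemma iter_dec (R : comPzRingType) (HR : noetherian R) (E : lmodType R) (HE : injective_module E)
  (a : nat -> R) (e : E) (k : nat) :
  exists (u : nat -> E) (t : E) (w : nat -> nat),
    e = \sum_(i < k) a i *: u i + t /\ forall i, (i < k)%N -> a i ^+ w i *: t = 0.
Proof.
elim: k => [|k [u [t [w [He Hw]]]]].
  by exists (fun _ => 0), e, (fun _ => 0%N); rewrite big_ord0 add0r.
have [m Hm] := @stab _ HR _ (a k) t.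
have [u0 [Hu0 Hann]] := @step _ _ HE _ _ _ Hm.
exists (fun j => if j == k then u0 else u j), (t - a k *: u0),
  (fun j => if j == k then m else w j); split.
  rewrite big_ord_recr /= eqxx -addrA [a k *: u0 + _]addrC subrK.
  rewrite He; congr (_ + _); apply: eq_bigr => i _.
  by rewrite (ltn_eqF (ltn_ord i)).
move=> i; rewrite ltnS leq_eqVlt => /orP [/eqP -> | Hi].
  by rewrite eqxx scalerBr scalerA -exprSr Hu0 subrr.
rewrite (ltn_eqF Hi) scalerBr Hw // sub0r scalerA mulrC -scalerA Hann ?scaler0 ?oppr0 //.
exact: Hw.
Qed.

Definition Kd (R : comPzRingType) (I : R -> Prop) (E : lmodType R) (d : nat) (t : E) :=
  forall x, ideal_pow I d x -> x *: t = 0.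
Arguments Kd {R} I {E} d t.

Lemma KdA (R : comPzRingType) (I : R -> Prop) (s : seq R) (E : lmodType R) d (t : E) :
  (forall x, I x -> in_ideal_gen s x) ->
  (forall i, (i < size s)%N -> Kd I d (s`_i *: t)) -> Kd I d.+1 t.
Proof.
move=> Hs HK x [l [Hl ->]]; rewrite scaler_suml big1_seq // => p /Hl [/Hs [c [_ ->]] H2].
rewrite mulr_suml scaler_suml big1 // => i _.
by rewrite -mulrA -scalerA mulrC -scalerA (HK i (ltn_ord i)) // scaler0.
Qed.

Lemma Kd_vec (R : comPzRingType) (I : R -> Prop) (s : seq R) (E : lmodType R)
  (Hs : forall x, I x -> in_ideal_gen s x) :
  forall D (w : nat -> nat) (t : E), (\sum_(i < size s) w i)%N = D ->
  (forall i, (i < size s)%N -> s`_i ^+ w i *: t = 0) -> Kd I D.+1 t.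
Proof.
elim=> [|D IH] w t Hsum Hw; apply: (@KdA _ _ _ _ _ _ Hs) => i Hi.
- have Hwi : w i = 0%N.
    apply/eqP; rewrite -leqn0 -Hsum (bigD1 (Ordinal Hi)) //=; exact: leq_addr.
  have := Hw i Hi; rewrite Hwi expr0 scale1r => ->.
  by move=> x _; rewrite !scaler0.
- case Hwi: (w i) => [|wi].
    have := Hw i Hi; rewrite Hwi expr0 scale1r => ->.
    by move=> x _; rewrite !scaler0.
  apply: (IH (fun j => if j == i then wi else w j)).
    rewrite (bigD1 (Ordinal Hi)) //= eqxx.
    rewrite (bigD1 (Ordinal Hi)) //= Hwi addSn in Hsum; case: Hsum => <-.
    congr (_ + _)%N; apply: eq_bigr => j Hj.
    by have -> : (nat_of_ord j == i) = false by apply/eqP => E0; move/eqP: Hj; apply; apply: val_inj.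
  move=> j Hj; case: eqP => [->|/eqP Hji].
    by rewrite scalerA -exprSr -Hwi Hw.
  by rewrite scalerA mulrC -scalerA Hw // scaler0.
Qed.

Theorem lemma3p3 (R : comPzRingType) (HR : noetherian R)
  (I : R -> Prop) (HI : is_ideal I)
  (E : lmodType R) (HE : injective_module E)
  (K : E -> Prop) (HK : is_submodule K)
  (L : lmodType R) (pi : {linear E -> L})
  (pi_surj : forall y : L, exists x : E, pi x = y)
  (pi_ker : forall x : E, pi x = 0 <-> K x)
  (Q : lmodType R) (q : {linear L -> Q})
  (q_surj : forall y : Q, exists x : L, q x = y)
  (q_ker : forall x : L, q x = 0 <-> Gamma I x)
  (S : lmodType R) (p : {linear R^o -> S})
  (p_surj : forall y : S, exists x : R^o, p x = y)
  (p_ker : forall x : R^o, p x = 0 <-> I x) :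
  tensor_zero Q S.
Proof.
have [s Hs] := HR I HI.
have HsI : forall x, I x -> in_ideal_gen s x by move=> x /Hs.
have Hgen : forall i, (i < size s)%N -> I s`_i by move=> i Hi; apply/Hs; exact: gen_in.
move=> P b [b1 [b2 [b3 b4]]] x y.
have b0l : forall y, b 0 y = 0.
  by move=> y0; apply: (addrI (b 0 y0)); rewrite -b1 !addr0.
have b0r : forall x, b x 0 = 0.
  by move=> x0; apply: (addrI (b x0 0)); rewrite -b3 !addr0.
have [z <-] := p_surj y.
have hz : forall d : R^o, p d = d *: p 1.
  move=> d; rewrite -linearZ; f_equal.
  by rewrite -[RHS]/(d * 1) mulr1.
rewrite hz b4.
suff -> : b x (p 1) = 0 by rewrite scaler0.
have [l <-] := q_surj x; have [e <-] := pi_surj l.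
have [u [t [w [He Hw]]]] := @iter_dec _ HR _ HE (fun i => s`_i) e (size s).
have Ht : q (pi t) = 0.
  apply/q_ker; exists (\sum_(i < size s) w i).+1%N; split => // r Hr.
  rewrite -linearZ (@Kd_vec _ _ _ _ HsI _ w t erefl Hw r Hr) linear0 //.
rewrite He !linearD Ht addr0 !linear_sum.
rewrite (big_morph (fun v => b v (p 1)) (fun v1 v2 => b1 v1 v2 (p 1)) (b0l (p 1))).
apply: big1 => i _.
rewrite !linearZ b2 -b4 -hz.
by have /p_ker -> := Hgen i (ltn_ord i); rewrite b0r.
Qed.
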